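(* Let $m\ge0$ and $n\ge0$ be integers. Then $r_n(q^{2m+1},q^2)$ is divisible by $(-q;q)_n$ and $r_n(-q^m,q)$ is divisible by $(q;q^2)_{\lfloor (n+1)/2\rfloor}$ in $\mathbb{Z}[q]$. More precisely, $$f(n,q^{2m+1},q)=\sum_{j=0}^m(-1)^jq^{j^2}\begin{bmatrix} m\\ j\end{bmatrix}_{q^2}(q^{n-j+1};q)_j\in\mathbb{Z}[q],$$ $$F(2n,q^m,q)=\sum_{k=0}^{\lfloor m/2\rfloor}q^{\binom{2k}{2}}\begin{bmatrix} m\\ 2k\end{bmatrix}_q(q^{2n-2k+2};q^2)_k\in\mathbb{Z}[q],$$ $$F(2n+1,q^m,q)=\sum_{k=0}^{\lfloor (m-1)/2\rfloor}q^{\binom{2k+1}{2}}\begin{bmatrix} m\\ 2k+1\end{bmatrix}_q(q^{2n-2k+2};q^2)_k\in\mathbb{Z}[q].$$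
   Context: $q$ is an indeterminate. $(x;q)_n=\prod_{j=0}^{n-1}(1-q^jx)$. The Gaussian binomial coefficient is $\begin{bmatrix} n\\ j\end{bmatrix}_q=\frac{(q;q)_n}{(q;q)_j(q;q)_{n-j}}$ for $0\le j\le n$ and $0$ otherwise. $r_n(s,q)=\sum_{j=0}^n\begin{bmatrix} n\\ j\end{bmatrix}_q s^j$ (Rogers–Szegö polynomials). The normalized Rogers–Szegö polynomials are $f(n,s,q)=\dfrac{\sum_{j=0}^n s^j\begin{bmatrix} n\\ j\end{bmatrix}_{q^2}}{(-q;q)_n}=\dfrac{r_n(s,q^2)}{(-q;q)_n}$ and $F(n,s,q)=\dfrac{\sum_{j=0}^n(-s)^j\begin{bmatrix} n\\ j\end{bmatrix}_{q}}{(q;q^2)_{\lfloor (n+1)/2\rfloor}}=\dfrac{r_n(-s,q)}{(q;q^2)_{\lfloor (n+1)/2\rfloor}}$. An empty sum is $0$. *)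

(* Defs.v *)
From HB Require Import structures.
From mathcomp Require Import all_boot all_order all_algebra.
Set Implicit Arguments. Unset Strict Implicit. Unset Printing Implicit Defensive.
Import Order.TTheory GRing.Theory Num.Theory.
Local Open Scope ring_scope.

Definition qpoch (a x : {poly int}) (n : nat) : {poly int} :=
  \prod_(j < n) (1 - x ^+ j * a).

(* Gaussian binomial coefficient [n j]_x = (x;x)_n / ((x;x)_j (x;x)_{n-j})
   for 0 <= j <= n and 0 otherwise (exact division in Z[q]; the
   denominator has leading coefficient +-1). *)
Definition qbin (x : {poly int}) (n j : nat) : {poly int} :=
  if (j <= n)%N then
    qpoch x x n %/ (qpoch x x j * qpoch x x (n - j))
  else 0.

Definition rs (n : nat) (s x : {poly int}) : {poly int} :=
  \sum_(j < n.+1) qbin x n j * s ^+ j.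

(* Main.v *)
Require Import Defs.
From HB Require Import structures.
From mathcomp Require Import all_boot all_order all_algebra.
From mathcomp Require Import ring lra zify.
Import Order.TTheory GRing.Theory Num.Theory.
Local Open Scope ring_scope.

Fixpoint qb (x : {poly int}) (n j : nat) : {poly int} :=
  match n, j with
  | _, 0%N => 1
  | 0%N, _.+1 => 0
  | n'.+1, j'.+1 => qb x n' j' + x ^+ j'.+1 * qb x n' j'.+1
  end.

Lemma qpochS a x n : qpoch a x n.+1 = qpoch a x n * (1 - x ^+ n * a).
Proof. by rewrite /qpoch big_ord_recr. Qed.

Lemma qpochSl a x n : qpoch a x n.+1 = (1 - a) * qpoch (x * a) x n.
Proof.
rewrite /qpoch big_ord_recl /= expr0 mul1r; congr (_ * _).
by apply: eq_bigr => i _; rewrite exprSr mulrA.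
Qed.

Lemma qpoch0 a x : qpoch a x 0 = 1.
Proof. by rewrite /qpoch big_ord0. Qed.

Lemma qpoch1 x n : qpoch 1 x n.+1 = 0.
Proof. by rewrite qpochSl subrr mul0r. Qed.

Lemma qb_gt x n j : (n < j)%N -> qb x n j = 0.
Proof.
elim: n j => [|n IH] [|j] //= H.
by rewrite !IH ?mulr0 ?addr0 //; apply: ltnW.
Qed.

Lemma qbn0 x n : qb x n 0 = 1.
Proof. by case: n. Qed.

Lemma qb_prod x n j : (j <= n)%N ->
  qb x n j * (qpoch x x j * qpoch x x (n - j)) = qpoch x x n.
Proof.
elim: n j => [|n IH] [|j] //= H.
- by rewrite !qpoch0 !mulr1.
- by rewrite !qpoch0 !mul1r subn0.
have Hj : (j <= n)%N by [].
rewrite subSS mulrDl.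
have E1 : qb x n j * (qpoch x x j.+1 * qpoch x x (n - j))
          = qpoch x x n * (1 - x ^+ j.+1).
  rewrite qpochS -(IH j) // exprSr; ring.
have E2 : x ^+ j.+1 * qb x n j.+1 * (qpoch x x j.+1 * qpoch x x (n - j))
          = qpoch x x n * (x ^+ j.+1 - x ^+ n.+1).
  case: (ltnP j n) => Hjn.
  - have -> : (n - j = (n - j.+1).+1)%N by lia.
    rewrite (qpochS x x (n - j.+1)) -(IH j.+1) //.
    have -> : x ^+ n.+1 = x ^+ j.+1 * (x ^+ (n - j.+1) * x).
      by rewrite -exprSr -exprD; congr (_ ^+ _); lia.
    ring.
  - have -> : n = j by apply/eqP; rewrite eqn_leq Hj Hjn.
    by rewrite qb_gt // subrr !mulr0 mul0r.
transitivity (qpoch x x n * (1 - x ^+ j.+1) + qpoch x x n * (x ^+ j.+1 - x ^+ n.+1)).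
  by congr (_ + _); [exact: E1 | exact: E2].
rewrite qpochS (exprSr x n); ring.
Qed.

Definition goodx (x : {poly int}) := forall i, lead_coef (1 - x ^+ i.+1) \is a GRing.unit.

Lemma goodX k : (0 < k)%N -> goodx ('X ^+ k).
Proof.
move=> Hk i; rewrite -exprM.
have -> : 1 - 'X ^+ (k * i.+1) = - ('X ^+ (k * i.+1) - 1%:P) :> {poly int}.
  by rewrite polyC1 opprB.
rewrite lead_coefN lead_coefXnsubC ?unitrN1 //; lia.
Qed.

Lemma qpoch_unit x n : goodx x -> lead_coef (qpoch x x n) \is a GRing.unit.
Proof.
move=> gx; elim: n => [|n IH]; first by rewrite qpoch0 lead_coef1 unitr1.
by rewrite qpochS lead_coefM unitrM IH -exprSr gx.
Qed.

Lemma unit_neq0 (p : {poly int}) : lead_coef p \is a GRing.unit -> p != 0.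
Proof. by apply: contraTneq => ->; rewrite lead_coef0 unitr0. Qed.

Lemma qbin_qb x n j : goodx x -> qbin x n j = qb x n j.
Proof.
move=> gx; rewrite /qbin; case: leqP => H; last by rewrite qb_gt.
rewrite -(qb_prod _ _ _ H) Pdiv.IdomainUnit.mulpK //.
by rewrite lead_coefM unitrM !qpoch_unit.
Qed.

Lemma qbD_neq0 x a b : goodx x -> qpoch x x a * qpoch x x b != 0.
Proof. by move=> gx; apply: unit_neq0; rewrite lead_coefM unitrM !qpoch_unit. Qed.

Lemma qb_pascal2 x n j : goodx x ->
  qb x n.+1 j.+1 = x ^+ (n - j) * qb x n j + qb x n j.+1.
Proof.
move=> gx; case: (leqP j n) => H; last first.
  by rewrite !qb_gt ?mulr0 ?addr0 //; lia.
apply: (mulIf (qbD_neq0 x j.+1 (n - j) gx)).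
have -> : (n - j = n.+1 - j.+1)%N by lia.
rewrite qb_prod // mulrDl.
have E1 : x ^+ (n.+1 - j.+1) * qb x n j * (qpoch x x j.+1 * qpoch x x (n.+1 - j.+1))
   = qpoch x x n * (x ^+ (n - j) - x ^+ n.+1).
  rewrite subSS qpochS -(qb_prod _ _ _ H).
  have -> : x ^+ n.+1 = x ^+ (n - j) * (x ^+ j * x).
    by rewrite -exprSr -exprD; congr (_ ^+ _); lia.
  ring.
have E2 : qb x n j.+1 * (qpoch x x j.+1 * qpoch x x (n.+1 - j.+1))
   = qpoch x x n * (1 - x ^+ (n - j)).
  case: (ltnP j n) => Hjn.
  - rewrite subSS.
    have -> : (n - j = (n - j.+1).+1)%N by lia.
    rewrite (qpochS x x (n - j.+1)) -(qb_prod _ _ _ Hjn) -exprSr; ring.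
  - have -> : n = j by apply/eqP; rewrite eqn_leq H Hjn.
    by rewrite qb_gt // mul0r !subnn expr0 subrr mulr0.
symmetry; transitivity (qpoch x x n * (x ^+ (n - j) - x ^+ n.+1) + qpoch x x n * (1 - x ^+ (n - j))).
  by congr (_ + _); [exact: E1 | exact: E2].
rewrite qpochS (exprSr x n); ring.
Qed.

Lemma qb_sym x n j : goodx x -> (j <= n)%N -> qb x n (n - j) = qb x n j.
Proof.
move=> gx H; apply: (mulIf (qbD_neq0 x j (n - j) gx)).
rewrite (qb_prod _ _ _ H) [qpoch x x j * _]mulrC.
have H' : (n - j <= n)%N by apply: leq_subr.
by have := qb_prod x _ _ H'; rewrite subKn.
Qed.

Lemma sum_widen (F : nat -> {poly int}) a N : (a <= N)%N ->
  (forall j, (a <= j)%N -> F j = 0) -> \sum_(j < N) F j = \sum_(j < a) F j.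
Proof.
move=> H HF; elim: N H => [|N IH] H.
  by have -> : a = 0%N by lia.
case: (ltnP N a) => H2.
  by have -> : a = N.+1 by lia.
by rewrite big_ord_recr /= HF // addr0 IH.
Qed.

Lemma rs_w x n s N : goodx x -> (n < N)%N ->
  rs n s x = \sum_(j < N) qb x n j * s ^+ j.
Proof.
move=> gx H; rewrite /rs (@sum_widen (fun j => qb x n j * s ^+ j) _ _ H).
  by apply: eq_bigr => j _; rewrite qbin_qb.
by move=> j Hj; rewrite qb_gt ?mul0r.
Qed.

Lemma qb_coef x n j : goodx x ->
  qb x n.+1 j.+1 * (1 - x ^+ j.+1) = (1 - x ^+ n.+1) * qb x n j.
Proof.
move=> gx; case: (leqP j n) => H; last first.
  by rewrite !qb_gt ?mulr0 ?mul0r //; lia.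
have P1 : qb x n.+1 j.+1 = qb x n j + x ^+ j.+1 * qb x n j.+1 by [].
have P2 := qb_pascal2 x n j gx.
have -> : x ^+ n.+1 = x ^+ j.+1 * x ^+ (n - j) by rewrite -exprD; congr (_ ^+ _); lia.
rewrite mulrBr mulr1 {1}P1 P2; ring.
Qed.

Lemma E1 x n s : goodx x ->
  rs n.+1 (x * s) x = rs n.+1 s x - s * (1 - x ^+ n.+1) * rs n s x.
Proof.
move=> gx; rewrite (rs_w _ _ _ _ gx (ltnSn n.+1)) (rs_w _ _ _ _ gx (ltnSn n.+1)).
rewrite (rs_w _ _ _ _ gx (ltnSn n)) !(big_ord_recl n.+1) !expr0 mulr_sumr.
rewrite -addrA -sumrB; congr (_ + _); apply: eq_bigr => j _.
have K := qb_coef x n j gx.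
rewrite lift0.
set c := qb x n.+1 j.+1; set d := qb x n j.
apply/eqP; rewrite -subr_eq0.
have -> : c * (x * s) ^+ j.+1 - (c * s ^+ j.+1 - s * (1 - x ^+ n.+1) * (d * s ^+ j))
  = s * s ^+ j * ((1 - x ^+ n.+1) * d - c * (1 - x ^+ j.+1)).
  rewrite !exprS exprMn; ring.
by rewrite K subrr mulr0.
Qed.

Lemma E2 x n s : goodx x ->
  rs n.+1 s x = s * rs n s x + rs n (x * s) x.
Proof.
move=> gx; rewrite (rs_w _ _ _ _ gx (ltnSn n.+1)) (rs_w _ _ _ _ gx (ltnSn n)).
rewrite (rs_w _ _ _ _ gx (ltnW (ltnSn n.+1))) !(big_ord_recl n.+1) !expr0 mulr_sumr.
transitivity (qb x n (@ord0 n) * 1 + (\sum_(i < n.+1) s * (qb x n i * s ^+ i) +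
  \sum_(i < n.+1) qb x n (lift ord0 i) * (x * s) ^+ lift ord0 i)); last by rewrite addrCA.
congr (_ + _); first by rewrite !qbn0.
rewrite -big_split /=; apply: eq_bigr => j _.
rewrite /bump leq0n !add1n !add0n !exprS exprMn; ring.
Qed.

Lemma goodX1 : goodx 'X.
Proof. by rewrite -[X in goodx X]expr1; apply: goodX. Qed.
Lemma goodX2 : goodx ('X ^+ 2).
Proof. exact: goodX. Qed.

Lemma rs0 x s : goodx x -> rs 0 s x = 1.
Proof. by move=> gx; rewrite (rs_w _ _ _ _ gx (ltnSn 0)) big_ord1 /= mulr1. Qed.

Lemma three_term x n s : goodx x ->
  rs n.+2 s x = (1 + s) * rs n.+1 s x - s * (1 - x ^+ n.+1) * rs n s x.
Proof.
move=> gx; rewrite (E2 _ _ _ gx) (E1 _ _ _ gx); ring.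
Qed.

Lemma gauss n : rs (2 * n) (-1) 'X = qpoch 'X ('X ^+ 2) n /\ rs (2 * n + 1) (-1) 'X = 0.
Proof.
elim: n => [|n [IH1 IH2]].
  split; first by rewrite muln0 rs0 ?qpoch0 //; exact: goodX1.
  rewrite (rs_w _ _ _ _ goodX1 (ltnSn 1)) !big_ord_recr big_ord0 /=.
  by rewrite add0r expr0 expr1 mulr1 mulr0 addr0 mulrN1 subrr.
have -> : (2 * n.+1 = (2 * n).+2)%N by lia.
have -> : ((2 * n).+2 + 1 = (2 * n + 1).+2)%N by lia.
rewrite !(three_term _ _ _ goodX1) IH1 IH2 subrr !mul0r mulr0 !sub0r oppr0.
split => //.
rewrite qpochS -exprM.
have -> : (2 * n).+1 = (2 * n + 1)%N by lia.
rewrite exprD expr1; ring.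
Qed.

Lemma bump0 j : bump 0 j = j.+1. Proof. by []. Qed.

Lemma u_id n : rs n 'X ('X ^+ 2) = qpoch (- 'X) 'X n.
Proof.
elim: n => [|n IH]; first by rewrite rs0 ?qpoch0 //; exact: goodX2.
set Q := 'X ^+ 2 : {poly int}.
have gQ : goodx Q by exact: goodX2.
have A : rs n.+1 'X Q = 1 + (\sum_(j < n.+1) qb Q n j.+1 * 'X ^+ j.+1
            + \sum_(j < n.+1) Q ^+ (n - j) * qb Q n j * 'X ^+ j.+1).
  rewrite (rs_w _ _ _ _ gQ (ltnSn n.+1)) big_ord_recl qbn0 expr0 mulr1.
  congr (_ + _); rewrite -big_split /=; apply: eq_bigr => j _.
  have P := qb_pascal2 Q n j gQ; rewrite /= in P; rewrite ?lift0 ?bump0 !add0n P; ring.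
have B : rs n 'X Q = 1 + \sum_(j < n.+1) qb Q n j.+1 * 'X ^+ j.+1.
  rewrite (rs_w _ _ _ _ gQ (ltnW (ltnSn n.+1))) big_ord_recl qbn0 expr0 mulr1.
  by congr (_ + _); apply: eq_bigr => j _; rewrite ?lift0 ?bump0.
have C : \sum_(j < n.+1) Q ^+ (n - j) * qb Q n j * 'X ^+ j.+1 = 'X ^+ n.+1 * rs n 'X Q.
  rewrite (rs_w _ _ _ _ gQ (ltnSn n)) (reindex_inj rev_ord_inj) /= mulr_sumr.
  apply: eq_bigr => j _; rewrite subSS.
  have Hj : (j <= n)%N by rewrite -ltnS ltn_ord.
  rewrite subKn // (qb_sym _ _ _ gQ Hj).
  have E : (2 * j + (n - j).+1 = n.+1 + j)%N by lia.
  rewrite /Q -exprM; transitivity (qb ('X ^+ 2) n j * 'X ^+ (2 * j + (n - j).+1)).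
    by rewrite exprD; ring.
  by rewrite E exprD; ring.
rewrite A addrA -B C IH qpochS exprSr; ring.
Qed.

Lemma qp_shift (y : {poly int}) c k :
  qpoch (y ^+ (c - k)) y k.+1 = qpoch (y ^+ (c - k)) y k * (1 - y ^+ c).
Proof.
rewrite qpochS; case: (leqP k c) => H.
  by rewrite -exprD subnKC.
have -> : (c - k = 0)%N by lia.
by case: k H => [//|k] H; rewrite expr0 qpoch1 !mul0r.
Qed.

Definition T n m : {poly int} :=
  \sum_(j < m.+1) (-1) ^+ j * 'X ^+ (j ^ 2) * qbin ('X ^+ 2) m j
                       * qpoch ('X ^+ (n.+1 - j)) 'X j.

Definition TF n m j : {poly int} :=
  (-1) ^+ j * 'X ^+ (j ^ 2) * qb ('X ^+ 2) m j * qpoch ('X ^+ (n.+1 - j)) 'X j.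

Lemma T_w n m N : (m < N)%N -> T n m = \sum_(j < N) TF n m j.
Proof.
move=> H; rewrite /T (@sum_widen (TF n m) _ _ H).
  by apply: eq_bigr => j _; rewrite qbin_qb //; exact: goodX2.
by move=> j Hj; rewrite /TF qb_gt // mulr0 mul0r.
Qed.

Lemma TF0 n m : TF n m 0 = 1.
Proof. by rewrite /TF !expr0 qbn0 qpoch0 !mulr1. Qed.

Lemma T0 m : T 0 m = 1.
Proof.
rewrite (T_w 0 m _ (ltnSn m)) big_ord_recl TF0 big1 ?addr0 // => j _.
by rewrite lift0 /TF subSS sub0n expr0 qpoch1 mulr0.
Qed.

Lemma TG n m : T n.+1 m.+1 = T n.+1 m - 'X ^+ (2 * m + 1) * (1 - 'X ^+ n.+1) * T n m.
Proof.
rewrite (T_w n.+1 m.+1 _ (ltnSn m.+1)) (T_w n.+1 m _ (ltnW (ltnSn m.+1))) (T_w n m _ (ltnSn m)).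
rewrite !(big_ord_recl m.+1) !TF0 mulr_sumr -addrA -sumrB; congr (_ + _).
apply: eq_bigr => j _; rewrite lift0 /TF.
have Hj : (j <= m)%N by rewrite -ltnS ltn_ord.
rewrite (qb_pascal2 _ _ _ goodX2) subSS qp_shift.
have e1 : 'X ^+ (j.+1 ^ 2) = 'X ^+ (j ^ 2) * 'X ^+ (2 * j + 1) :> {poly int}.
  by rewrite -exprD; congr (_ ^+ _); rewrite !expnS !expn0 !muln1; nia.
have e2 : ('X ^+ 2) ^+ (m - j) = 'X ^+ (2 * (m - j)) :> {poly int} by rewrite exprM.
have e3 : 'X ^+ (2 * m + 1) = 'X ^+ (2 * j + 1) * 'X ^+ (2 * (m - j)) :> {poly int}.
  by rewrite -exprD; congr (_ ^+ _); lia.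
rewrite e1 e2 e3 exprS; ring.
Qed.

Lemma id2 m n : rs n ('X ^+ (2 * m + 1)) ('X ^+ 2) = qpoch (- 'X) 'X n * T n m.
Proof.
elim: m n => [|m IH] n.
  rewrite muln0 add0n expr1 u_id /T big_ord1 qbin_qb; last exact: goodX2.
  by rewrite !expr0 qbn0 qpoch0 !mulr1.
case: n => [|n].
  by rewrite rs0 ?T0 ?qpoch0 ?mulr1 //; exact: goodX2.
have -> : 'X ^+ (2 * m.+1 + 1) = 'X ^+ 2 * 'X ^+ (2 * m + 1) :> {poly int}.
  by rewrite -exprD; congr (_ ^+ _); lia.
rewrite (E1 _ _ _ goodX2) !IH TG qpochS.
have -> : ('X ^+ 2) ^+ n.+1 = 'X ^+ n.+1 * 'X ^+ n.+1 :> {poly int}.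
  by rewrite -exprM -exprD; congr (_ ^+ _); lia.
rewrite exprSr; ring.
Qed.

Definition Ue n m : {poly int} :=
  \sum_(k < (m./2).+1) 'X ^+ 'C(2 * k, 2) * qbin 'X m (2 * k)
                            * qpoch ('X ^+ (2 * n + 2 - 2 * k)) ('X ^+ 2) k.
Definition Uo n m : {poly int} :=
  \sum_(k < (m.+1)./2) 'X ^+ 'C(2 * k + 1, 2) * qbin 'X m (2 * k + 1)
                            * qpoch ('X ^+ (2 * n + 2 - 2 * k)) ('X ^+ 2) k.
Definition UeF n m k : {poly int} :=
  'X ^+ 'C(2 * k, 2) * qb 'X m (2 * k) * qpoch (('X ^+ 2) ^+ (n.+1 - k)) ('X ^+ 2) k.
Definition UoF n m k : {poly int} :=
  'X ^+ 'C(2 * k + 1, 2) * qb 'X m (2 * k + 1) * qpoch (('X ^+ 2) ^+ (n.+1 - k)) ('X ^+ 2) k.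

Lemma X2pow n k : 'X ^+ (2 * n + 2 - 2 * k) = ('X ^+ 2) ^+ (n.+1 - k) :> {poly int}.
Proof. by rewrite -exprM; congr (_ ^+ _); lia. Qed.

Lemma Ue_w n m N : (m < N)%N -> Ue n m = \sum_(k < N) UeF n m k.
Proof.
move=> H; have := odd_double_half m; have := leq_b1 (odd m) => h1 h2.
rewrite /Ue (@sum_widen (UeF n m) (m./2).+1 N); first last.
- move=> k Hk; rewrite /UeF qb_gt ?mulr0 ?mul0r //; rewrite -mul2n in h2; lia.
- rewrite -mul2n in h2; lia.
by apply: eq_bigr => k _; rewrite /UeF qbin_qb ?X2pow //; exact: goodX1.
Qed.

Lemma Uo_w n m N : (m < N)%N -> Uo n m = \sum_(k < N) UoF n m k.
Proof.
move=> H; have := odd_double_half m.+1; have := leq_b1 (odd m.+1) => h1 h2.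
rewrite /Uo (@sum_widen (UoF n m) (m.+1)./2 N); first last.
- move=> k Hk; rewrite /UoF qb_gt ?mulr0 ?mul0r //; rewrite -mul2n in h2; lia.
- rewrite -mul2n in h2; lia.
by apply: eq_bigr => k _; rewrite /UoF qbin_qb ?X2pow //; exact: goodX1.
Qed.

Lemma UeF0 n m : UeF n m 0 = 1.
Proof. by rewrite /UeF muln0 qbn0 qpoch0 bin0n expr0 !mulr1. Qed.

Lemma Ue0 m : Ue 0 m = 1.
Proof.
rewrite (Ue_w 0 m _ (ltnSn m)) big_ord_recl UeF0 big1 ?addr0 // => k _.
by rewrite lift0 /UeF subSS sub0n expr0 qpoch1 mulr0.
Qed.

Lemma Uen0 n : Ue n 0 = 1.
Proof. by rewrite /Ue big_ord1 qbin_qb ?muln0 ?qbn0 ?qpoch0 ?bin0n ?expr0 ?mulr1 //; exact: goodX1. Qed.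

Lemma Uon0 n : Uo n 0 = 0.
Proof. by rewrite /Uo big_ord0. Qed.

Lemma UoR n m : Uo n m.+1 = Uo n m + 'X ^+ m * Ue n m.
Proof.
rewrite (Uo_w n m.+1 _ (ltnSn m.+1)) (Uo_w n m _ (ltnW (ltnSn m.+1))).
rewrite (Ue_w n m _ (ltnW (ltnSn m.+1))) mulr_sumr -big_split /=.
apply: eq_bigr => k _; rewrite /UoF /UeF addn1 (qb_pascal2 _ _ _ goodX1).
case: (leqP (2 * k) m) => H; last by rewrite (qb_gt _ _ _ H); ring.
rewrite binS bin1 exprD.
have -> : 'X ^+ m = 'X ^+ (2 * k) * 'X ^+ (m - 2 * k) :> {poly int}.
  by rewrite -exprD subnKC.
ring.
Qed.

Lemma UeR n m : Ue n.+1 m.+1 = Ue n.+1 m + 'X ^+ m * (1 - ('X ^+ 2) ^+ n.+1) * Uo n m.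
Proof.
rewrite (Ue_w n.+1 m.+1 _ (ltnSn m.+1)) (Ue_w n.+1 m _ (ltnW (ltnSn m.+1))) (Uo_w n m _ (ltnSn m)).
rewrite !(big_ord_recl m.+1) !UeF0 mulr_sumr -addrA -big_split /=; congr (_ + _).
apply: eq_bigr => k _; rewrite ?lift0 ?bump0 /UeF /UoF.
have e : (2 * k.+1 = (2 * k + 1).+1)%N by lia.
rewrite !e (qb_pascal2 _ m (2 * k + 1) goodX1) subSS qp_shift.
case: (leqP (2 * k + 1) m) => H; last by rewrite (qb_gt _ _ _ H); ring.
rewrite binS bin1 exprD.
have -> : 'X ^+ m = 'X ^+ (2 * k + 1) * 'X ^+ (m - (2 * k + 1)) :> {poly int}.
  by rewrite -exprD subnKC.
ring.
Qed.

Lemma Fid m : (forall n, rs (2 * n) (- 'X ^+ m) 'X = qpoch 'X ('X ^+ 2) n * Ue n m) /\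
              (forall n, rs (2 * n + 1) (- 'X ^+ m) 'X = qpoch 'X ('X ^+ 2) n.+1 * Uo n m).
Proof.
elim: m => [|m [IHe IHo]].
  split => n; rewrite expr0 ?Uen0 ?Uon0 ?mulr1 ?mulr0; by case: (gauss n).
have eX : - 'X ^+ m.+1 = 'X * (- 'X ^+ m) :> {poly int} by rewrite exprS mulrN.
have Ho : forall n, rs (2 * n + 1) (- 'X ^+ m.+1) 'X = qpoch 'X ('X ^+ 2) n.+1 * Uo n m.+1.
  move=> n; rewrite eX addn1 (E1 _ _ _ goodX1) -addn1 IHe IHo UoR qpochS -exprM.
  have -> : 'X ^+ (2 * n) * 'X = 'X ^+ (2 * n + 1) :> {poly int} by rewrite exprD expr1.
  rewrite addn1; ring.
split => // [[|n]].
  by rewrite muln0 rs0 ?qpoch0 ?Ue0 ?mulr1 //; exact: goodX1.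
have e : (2 * n.+1 = (2 * n + 1).+1)%N by lia.
rewrite e eX (E1 _ _ _ goodX1) -e IHe IHo UeR -exprM e; ring.
Qed.

Theorem corollary2p1 (m n : nat) :
  (exists g : {poly int},
     rs n (- 'X ^+ m) 'X = qpoch 'X ('X ^+ 2) (n.+1)./2 * g)
  /\
  rs n ('X ^+ (2 * m + 1)) ('X ^+ 2)
    = qpoch (- 'X) 'X n *
      \sum_(j < m.+1) (-1) ^+ j * 'X ^+ (j ^ 2) * qbin ('X ^+ 2) m j
                       * qpoch ('X ^+ (n.+1 - j)) 'X j
  /\
  rs (2 * n) (- 'X ^+ m) 'X
    = qpoch 'X ('X ^+ 2) ((2 * n).+1)./2 *
      \sum_(k < (m./2).+1) 'X ^+ 'C(2 * k, 2) * qbin 'X m (2 * k)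
                            * qpoch ('X ^+ (2 * n + 2 - 2 * k)) ('X ^+ 2) k
  /\
  rs (2 * n + 1) (- 'X ^+ m) 'X
    = qpoch 'X ('X ^+ 2) ((2 * n + 1).+1)./2 *
      \sum_(k < (m.+1)./2) 'X ^+ 'C(2 * k + 1, 2) * qbin 'X m (2 * k + 1)
                            * qpoch ('X ^+ (2 * n + 2 - 2 * k)) ('X ^+ 2) k.
Proof.
have h1 : forall k, ((2 * k).+1)./2 = k by move=> k; rewrite mul2n; exact: uphalf_double.
have h2 : forall k, ((2 * k + 1).+1)./2 = k.+1.
  move=> k; have -> : ((2 * k + 1).+1 = (k.+1).*2)%N by rewrite -mul2n; lia.
  exact: doubleK.
have [Fe Fo] := Fid m.
split.
  have := odd_double_half n; rewrite -mul2n.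
  case: (odd n) => /= <-.
    exists (Uo n./2 m); rewrite add1n -addn1 Fo; congr (qpoch _ _ _ * _).
    by have := h2 n./2.
  exists (Ue n./2 m); rewrite add0n Fe; congr (qpoch _ _ _ * _).
  by have := h1 n./2.
split; first exact: id2.
split; first by rewrite h1 Fe.
by rewrite h2 Fo.
Qed.
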